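(* Let $\Gamma'\subset\Gamma$ be elliptic graphs, $\Gamma'$ a proper connected full subgraph, with index of extension $i=i_{(\Gamma',\Gamma)}$. Then $j^*_{\Gamma'}(C^\Gamma_j)=C^{\Gamma'}_{j-i}$ for every $j\ge i-1$ (with $j\le m$).
   Context: For a decorated tree $G$ (vertex set $\mathcal V(G)$, integer decorations $e_v$, genera zero, negative definite form on $L(G)=\mathbb Z\langle E_v\rangle$ with $(E_v,E_v)=e_v$, $(E_v,E_w)=1$ for adjacent $v\ne w$, $0$ otherwise) let $L'(G)$ be the dual lattice, $[l']$ the class in $L'(G)/L(G)$, $E_v^{*G}$ with $(E_v^{*G},E_w)=-\delta_{vw}$, $Z_K^G$ with $(Z_K^G,E_v)=e_v+2$, $\chi(l')=-(l',l'-Z_K^G)/2$; $\ge$ coordinatewise, $l>0$ if $l\ge0,l\ne0$, $|l'|$ the support. $\mathcal S'(G)=\{l':(l',E_v)\le0\ \forall v\}$, $s_h=\min\{l'\in\mathcal S'(G):[l']=h\}$, $Z_{min}(B)$ the minimal nonzero element of $\mathcal S'(B)\cap L(B)$. Elliptic graph: $e_v\le-2$ for all $v$ and $\min_{l\in L(G),l>0}\chi(l)=0$. NN-elliptic sequence: $B^G_{-1}=G$, $Z_{B_{-1}}=s_{[Z^G_K]}$, $B^G_0=|Z^G_K-s_{[Z^G_K]}|$; for $j\ge0$, $Z_{B_j}=Z_{min}(B^G_j)$, and if $Z^G_K-\sum_{i=-1}^jZ_{B_i}\ne0$ then $B^G_{j+1}=|Z^G_K-\sum_{i=-1}^jZ_{B_i}|$;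 $m$ is the index with $Z^G_K=\sum_{i=-1}^mZ_{B_i}$; $C^G_j=\sum_{i=-1}^jZ_{B_i}$. It is known that there is a unique integer $i_{(\Gamma',\Gamma)}\ge0$ (index of the extension) with $B^\Gamma_i\subseteq\Gamma'\subsetneq B^\Gamma_{i-1}$, and that the NN-elliptic sequence of $\Gamma'$ is $\Gamma',B^\Gamma_i,\dots,B^\Gamma_m$. The dual operator $j^*_{\Gamma'}:L'(\Gamma)\to L'(\Gamma')$ is the linear map with $j^*_{\Gamma'}(E_v^{*\Gamma})=E_v^{*\Gamma'}$ for $v\in\mathcal V(\Gamma')$ and $j^*_{\Gamma'}(E_v^{*\Gamma})=0$ otherwise. *)

(* Defs.v *)
(* Decorated graphs on the vertex type 'I_n; subgraphs are
   vertex sets S (full subgraphs); elements of L'(S) (x) Q are row vectors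
   'rV[rat]_n of coordinates in the basis (E_v), supported on S. *)
From HB Require Import structures.
From mathcomp Require Import all_boot all_order all_algebra.
Set Implicit Arguments. Unset Strict Implicit. Unset Printing Implicit Defensive.
Import Order.TTheory GRing.Theory Num.Theory.
Local Open Scope ring_scope.

Section Defs.
Variables (n : nat) (e : 'I_n -> int) (adj : rel 'I_n).

Definition vec := 'rV[rat]_n.

Definition Imat : 'M[rat]_n :=
  \matrix_(v, w) (if v == w then (e v)%:~R else if adj v w then 1 else 0).

Definition form (x y : vec) : rat := (x *m Imat *m y^T) 0 0.

Definition Ev (v : 'I_n) : vec := delta_mx 0 v.

Definition supp (x : vec) : {set 'I_n} := [set v | x 0 v != 0].

Definition supported (S : {set 'I_n}) (x : vec) : Prop :=
  forall v, v \notin S -> x 0 v = 0.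

Definition inL (S : {set 'I_n}) (x : vec) : Prop :=
  supported S x /\ forall v, x 0 v \is a Num.int.

Definition inL' (S : {set 'I_n}) (x : vec) : Prop :=
  supported S x /\ forall v, v \in S -> form x (Ev v) \is a Num.int.

Definition lev (x y : vec) : Prop := forall v, x 0 v <= y 0 v.
Definition posv (x : vec) : Prop := lev 0 x /\ x != 0.

Definition negdef (S : {set 'I_n}) : Prop :=
  forall x, inL S x -> x != 0 -> form x x < 0.

Definition ImatS (S : {set 'I_n}) : 'M[rat]_n :=
  \matrix_(v, w) (if (v \in S) && (w \in S) then Imat v w
                  else if v == w then 1 else 0).

(* E_v^{*S}: the element of L'(S) with (E_v^{*S}, E_w) = -delta_{vw}, w in S *)
Definition Estar (S : {set 'I_n}) (v : 'I_n) : vec := - row v (invmx (ImatS S)).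

(* Z_K^S, characterised by (Z_K^S, E_v) = e_v + 2 for v in S *)
Definition ZK (S : {set 'I_n}) : vec :=
  \sum_(v in S) (- (e v + 2)%:~R) *: Estar S v.

Definition chi (S : {set 'I_n}) (l : vec) : rat := - form l (l - ZK S) / 2.

Definition inSprime (S : {set 'I_n}) (x : vec) : Prop :=
  inL' S x /\ forall v, v \in S -> form x (Ev v) <= 0.

Definition sameclass (S : {set 'I_n}) (x y : vec) : Prop := inL S (x - y).

Definition is_min (P : vec -> Prop) (x : vec) : Prop :=
  P x /\ forall y, P y -> lev x y.

Definition is_sZK (S : {set 'I_n}) (x : vec) : Prop :=
  is_min (fun y => inSprime S y /\ sameclass S y (ZK S)) x.

Definition is_Zmin (B : {set 'I_n}) (x : vec) : Prop :=
  is_min (fun y => inSprime B y /\ inL B y /\ y != 0) x.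

Definition connectedS (S : {set 'I_n}) : Prop :=
  S != set0 /\
  forall u v, u \in S -> v \in S ->
    connect (fun a b => [&& adj a b, a \in S & b \in S]) u v.

(* the whole graph is a tree: connected with #V - 1 (unordered) edges *)
Definition is_tree : Prop :=
  connectedS setT /\
  #|[set p : 'I_n * 'I_n | adj p.1 p.2]| = (2 * (n - 1))%N.

Definition elliptic (S : {set 'I_n}) : Prop :=
  (forall v, v \in S -> e v <= -2) /\
  (exists l, [/\ inL S l, posv l & chi S l = 0]) /\
  (forall l, inL S l -> posv l -> 0 <= chi S l).

(* partial sums; index shift: Zs k = Z_{B_{k-1}}, so Csum Zs k = C_{k-1} *)
Definition Csum (Zs : nat -> vec) (k : nat) : vec := \sum_(i < k.+1) Zs i.

(* NN-elliptic sequence of S, with shifted indices: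
   B k = B^S_{k-1}, Zs k = Z_{B_{k-1}}, M = m + 1. *)
Definition NNseq (S : {set 'I_n}) (B : nat -> {set 'I_n}) (Zs : nat -> vec)
  (M : nat) : Prop :=
  [/\ B 0%N = S,
      is_sZK S (Zs 0%N),
      (forall k, (k < M)%N ->
         [/\ ZK S - Csum Zs k != 0,
             B k.+1 = supp (ZK S - Csum Zs k) &
             is_Zmin (B k.+1) (Zs k.+1)]) &
      ZK S = Csum Zs M].

(* dual operator j^*_S : L'(Gamma) -> L'(S), E_v^* |-> E_v^{*S} (v in S), 0 else;
   x = sum_v -(x,E_v) E_v^{*Gamma} *)
Definition jstar (S : {set 'I_n}) (x : vec) : vec :=
  \sum_(v in S) (- form x (Ev v)) *: Estar S v.

End Defs.

(* Main.v *)
Require Import Defs.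
From HB Require Import structures.
From mathcomp Require Import all_boot all_order all_algebra.
From mathcomp Require Import ring lra zify.
Unset Printing Implicit Defensive.
Import Order.TTheory GRing.Theory Num.Theory.
Local Open Scope ring_scope.

Lemma fE n (e : 'I_n -> int) (adj : rel 'I_n) (x : vec n) w :
  Defs.form e adj x (Ev w) = \sum_a x 0 a * Imat e adj a w.
Proof.
rewrite /Defs.form /Ev mxE (bigD1 w) //= big1 => [|j /negbTE jw].
  by rewrite !mxE /= eqxx mulr1 addr0.
by rewrite !mxE jw andbF mulr0.
Qed.

Lemma fD n (e : 'I_n -> int) (adj : rel 'I_n) (x y : vec n) w :
  Defs.form e adj (x + y) (Ev w) = Defs.form e adj x (Ev w) + Defs.form e adj y (Ev w).
Proof. by rewrite !fE -big_split; apply: eq_bigr => a _; rewrite mxE mulrDl. Qed.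

Lemma fN n (e : 'I_n -> int) (adj : rel 'I_n) (x : vec n) w :
  Defs.form e adj (- x) (Ev w) = - Defs.form e adj x (Ev w).
Proof. by rewrite !fE -sumrN; apply: eq_bigr => a _; rewrite mxE mulNr. Qed.

Lemma fB n (e : 'I_n -> int) (adj : rel 'I_n) (x y : vec n) w :
  Defs.form e adj (x - y) (Ev w) = Defs.form e adj x (Ev w) - Defs.form e adj y (Ev w).
Proof. by rewrite fD fN. Qed.

Lemma fZ n (e : 'I_n -> int) (adj : rel 'I_n) c (x : vec n) w :
  Defs.form e adj (c *: x) (Ev w) = c * Defs.form e adj x (Ev w).
Proof. by rewrite !fE mulr_sumr; apply: eq_bigr => a _; rewrite mxE mulrA. Qed.

Lemma fsum n (e : 'I_n -> int) (adj : rel 'I_n) (S : {set 'I_n}) (X : 'I_n -> vec n) w :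
  Defs.form e adj (\sum_(v in S) X v) (Ev w) = \sum_(v in S) Defs.form e adj (X v) (Ev w).
Proof.
rewrite fE; under eq_bigr do rewrite summxE mulr_suml.
by rewrite exchange_big /=; apply: eq_bigr => v _; rewrite fE.
Qed.

Lemma f0 n (e : 'I_n -> int) (adj : rel 'I_n) w : Defs.form e adj (0 : vec n) (Ev w) = 0.
Proof. by rewrite fE big1 // => a _; rewrite mxE mul0r. Qed.

Lemma Imat_sym n (e : 'I_n -> int) (adj : rel 'I_n) : symmetric adj -> forall a b : 'I_n, Imat e adj a b = Imat e adj b a.
Proof. by move=> hs a b; rewrite !mxE eq_sym hs; case: eqP => // ->. Qed.

Lemma form_exp n (e : 'I_n -> int) (adj : rel 'I_n) (x y : vec n) : symmetric adj ->
  Defs.form e adj x y = \sum_w x 0 w * Defs.form e adj y (Ev w).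
Proof.
move=> hs.
have -> : \sum_w x 0 w * Defs.form e adj y (Ev w) =
   \sum_w \sum_a x 0 w * (y 0 a * Imat e adj a w).
  by apply: eq_bigr => w _; rewrite fE mulr_sumr.
rewrite /Defs.form mxE.
under eq_bigr do rewrite !mxE mulr_suml.
rewrite exchange_big /=; apply: eq_bigr => a _; apply: eq_bigr => b _.
by rewrite (Imat_sym _ _ _ hs b a) -mulrA [_ * y 0 b]mulrC.
Qed.

Lemma Imat_offdiag_ge0 n (e : 'I_n -> int) (adj : rel 'I_n) (a w : 'I_n) : a != w -> 0 <= Imat e adj a w.
Proof. by rewrite mxE => /negbTE ->; case: (adj a w). Qed.

Lemma lev0E n (z : vec n) : lev 0 z <-> forall v, 0 <= z 0 v.
Proof. by split=> h v; move: (h v); rewrite mxE. Qed.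

Lemma fE_ge0 n (e : 'I_n -> int) (adj : rel 'I_n) (z : vec n) w : lev 0 z -> z 0 w = 0 -> 0 <= Defs.form e adj z (Ev w).
Proof.
move=> /lev0E hz zw; rewrite fE; apply: sumr_ge0 => a _.
have [->|aw] := eqVneq a w; first by rewrite zw mul0r.
by apply: mulr_ge0 => //; apply: Imat_offdiag_ge0.
Qed.

Lemma Imat_int n (e : 'I_n -> int) (adj : rel 'I_n) (a b : 'I_n) : Imat e adj a b \is a Num.int.
Proof. by rewrite mxE; case: eqP => _; [apply: intr_int| case: adj]. Qed.

Lemma fint n (e : 'I_n -> int) (adj : rel 'I_n) (x : vec n) w : (forall a, x 0 a \is a Num.int) ->
  Defs.form e adj x (Ev w) \is a Num.int.
Proof.
by move=> h; rewrite fE; apply: rpred_sum => a _; apply: rpredM => //; apply: Imat_int.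
Qed.

Lemma form_exp2 n (e : 'I_n -> int) (adj : rel 'I_n) (x y : vec n) :
  Defs.form e adj x y = \sum_w Defs.form e adj x (Ev w) * y 0 w.
Proof.
rewrite {1}/Defs.form mxE; apply: eq_bigr => w _.
by rewrite fE !mxE.
Qed.

Lemma AS_out n (e : 'I_n -> int) (adj : rel 'I_n) (S : {set 'I_n}) (z : vec n) w :
  w \notin S -> (z *m ImatS e adj S) 0 w = z 0 w.
Proof.
move=> wS; rewrite mxE (bigD1 w) //= big1 => [|a /negbTE aw].
  by rewrite mxE (negbTE wS) andbF eqxx mulr1 addr0.
by rewrite mxE (negbTE wS) andbF aw mulr0.
Qed.

Lemma AS_in n (e : 'I_n -> int) (adj : rel 'I_n) (S : {set 'I_n}) (z : vec n) w :
  supported S z -> w \in S -> (z *m ImatS e adj S) 0 w = Defs.form e adj z (Ev w).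
Proof.
move=> hz wS; rewrite fE mxE; apply: eq_bigr => a _.
rewrite mxE wS andbT; case: (boolP (a \in S)) => aS //.
by rewrite hz // !mul0r.
Qed.

Lemma int_scale n (v : vec n) : exists N : rat, N != 0 /\ forall a, N * v 0 a \is a Num.int.
Proof.
exists (\prod_a ((denq (v 0 a))%:~R : rat)); split.
  by rewrite prodf_seq_neq0; apply/allP => a _; rewrite intr_eq0 denq_neq0.
move=> a; rewrite (bigD1 a) //= mulrAC [_ * v 0 a]mulrC -numqE.
by apply: rpredM; [apply: intr_int | apply: rpred_prod => b _; apply: intr_int].
Qed.

Lemma ImatS_unit n (e : 'I_n -> int) (adj : rel 'I_n) (S : {set 'I_n}) :
  negdef e adj setT -> ImatS e adj S \in unitmx.
Proof.
move=> hnd; rewrite unitmxE unitfE; apply/negP => /det0P [v vn0 vA].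
have vS : supported S v.
  by move=> w wS; rewrite -(AS_out _ e adj S v w wS) vA mxE.
have f0v : Defs.form e adj v v = 0.
  rewrite form_exp2 big1 // => w _.
  case: (boolP (w \in S)) => wS; last by rewrite vS // mulr0.
  by rewrite -(AS_in _ e adj S v w vS wS) vA mxE mul0r.
have [N [N0 hN]] := int_scale n v.
have := hnd (N *: v).
have -> : Defs.form e adj (N *: v) (N *: v) = N * N * Defs.form e adj v v.
  rewrite !form_exp2 mulr_sumr; apply: eq_bigr => w _.
  by rewrite fZ !mxE; ring.
rewrite f0v mulr0 ltxx scaler_eq0 negb_or N0 vn0 => H.
suff hL : inL setT (N *: v) by move: (H hL isT).
by split=> a; [rewrite in_setT | rewrite mxE].
Qed.

Lemma Estar_row n (e : 'I_n -> int) (adj : rel 'I_n) (S : {set 'I_n}) v :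
  negdef e adj setT ->
  row v (invmx (ImatS e adj S)) *m ImatS e adj S = row v 1%:M.
Proof. by move=> hnd; rewrite -row_mul mulVmx // ImatS_unit. Qed.

Lemma Estar_supp n (e : 'I_n -> int) (adj : rel 'I_n) (S : {set 'I_n}) v :
  negdef e adj setT -> v \in S -> supported S (Estar e adj S v).
Proof.
move=> hnd vS a aS; rewrite /Estar mxE.
have := congr1 (fun M : 'M[rat]_(1,n) => M 0 a) (Estar_row n e adj S v hnd).
rewrite AS_out // => ->; rewrite !mxE.
by have [va|] := eqVneq v a; [rewrite -va vS in aS | rewrite mulr0n oppr0].
Qed.

Lemma Estar_form n (e : 'I_n -> int) (adj : rel 'I_n) (S : {set 'I_n}) v w :
  negdef e adj setT -> v \in S -> w \in S ->
  Defs.form e adj (Estar e adj S v) (Ev w) = - (v == w)%:R.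
Proof.
move=> hnd vS wS; rewrite -(AS_in _ e adj S) //; last by apply: Estar_supp.
by rewrite /Estar mulNmx mxE Estar_row // !mxE.
Qed.

Lemma combo_supp n (e : 'I_n -> int) (adj : rel 'I_n) (S : {set 'I_n}) (c : 'I_n -> rat) :
  negdef e adj setT ->
  supported S (\sum_(v in S) c v *: Estar e adj S v).
Proof.
move=> hnd a aS; rewrite summxE big1 // => v vS.
by rewrite mxE Estar_supp // mulr0.
Qed.

Lemma combo_form n (e : 'I_n -> int) (adj : rel 'I_n) (S : {set 'I_n}) (c : 'I_n -> rat) w :
  negdef e adj setT -> w \in S ->
  Defs.form e adj (\sum_(v in S) c v *: Estar e adj S v) (Ev w) = - c w.
Proof.
move=> hnd wS; rewrite fsum (bigD1 w) //= big1 => [|v /andP [vS vw]].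
  by rewrite fZ Estar_form // eqxx mulrN1 addr0.
by rewrite fZ Estar_form // (negbTE vw) oppr0 mulr0.
Qed.

Lemma uniqS n (e : 'I_n -> int) (adj : rel 'I_n) (S : {set 'I_n}) (x y : vec n) :
  negdef e adj setT -> supported S x -> supported S y ->
  (forall w, w \in S -> Defs.form e adj x (Ev w) = Defs.form e adj y (Ev w)) ->
  x = y.
Proof.
move=> hnd hx hy hf; apply/eqP; rewrite -subr_eq0; apply/eqP.
have hz : supported S (x - y) by move=> a aS; rewrite !mxE hx // hy // subr0.
have zA : (x - y) *m ImatS e adj S = 0.
  apply/rowP => w; rewrite [RHS]mxE.
  case: (boolP (w \in S)) => wS; last by rewrite AS_out // hz.
  by rewrite AS_in // fB hf // subrr.
by rewrite -[x - y](mulmxK (ImatS_unit n e adj S hnd)) zA mul0mx.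
Qed.

Lemma ZK_supp n (e : 'I_n -> int) (adj : rel 'I_n) (S : {set 'I_n}) :
  negdef e adj setT -> supported S (ZK e adj S).
Proof. by move=> hnd; rewrite /ZK; apply: combo_supp. Qed.

Lemma ZK_form n (e : 'I_n -> int) (adj : rel 'I_n) (S : {set 'I_n}) w :
  negdef e adj setT -> w \in S -> Defs.form e adj (ZK e adj S) (Ev w) = (e w + 2)%:~R.
Proof. by move=> hnd wS; rewrite /ZK combo_form // opprK. Qed.

Lemma jstar_supp n (e : 'I_n -> int) (adj : rel 'I_n) (S : {set 'I_n}) x :
  negdef e adj setT -> supported S (jstar e adj S x).
Proof. by move=> hnd; rewrite /jstar; apply: combo_supp. Qed.

Lemma jstar_form n (e : 'I_n -> int) (adj : rel 'I_n) (S : {set 'I_n}) x w :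
  negdef e adj setT -> w \in S ->
  Defs.form e adj (jstar e adj S x) (Ev w) = Defs.form e adj x (Ev w).
Proof. by move=> hnd wS; rewrite /jstar combo_form // opprK. Qed.

Lemma Sprime_ge0 n (e : 'I_n -> int) (adj : rel 'I_n) (B : {set 'I_n}) (y : vec n) :
  negdef e adj setT -> supported B y -> (forall a, y 0 a \is a Num.int) ->
  (forall w, w \in B -> Defs.form e adj y (Ev w) <= 0) -> lev 0 y.
Proof.
move=> hnd hB hint hS; apply/lev0E => a.
rewrite leNgt; apply/negP => ya.
pose ym : vec n := \row_b (if y 0 b < 0 then - y 0 b else 0).
pose yp : vec n := \row_b (if y 0 b < 0 then 0 else y 0 b).
have ymE : ym = yp - y.
  by apply/rowP => b; rewrite !mxE; case: ifP => _; rewrite ?sub0r ?subrr.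
have ym0 : ym != 0.
  apply/negP => /eqP /rowP /(_ a); rewrite !mxE ya => /eqP; rewrite oppr_eq0.
  by move/eqP => y0; rewrite y0 ltxx in ya.
have hL : inL setT ym.
  split=> b; first by rewrite in_setT.
  by rewrite mxE; case: ifP => _; rewrite ?rpredN.
have := hnd ym hL ym0; apply/negP; rewrite -leNgt.
rewrite form_exp2; apply: sumr_ge0 => w _.
rewrite [ym 0 w]mxE; case: ifP => yw; last by rewrite mulr0.
apply: mulr_ge0; last by rewrite oppr_ge0 ltW.
rewrite ymE fB subr_ge0.
apply: (le_trans (y := 0)).
  apply: hS; apply/negPn/negP => wB; move: yw; rewrite hB // ltxx //.
apply: fE_ge0; last by rewrite mxE yw.
apply/lev0E => b; rewrite mxE; case: ifP => // /negbT; by rewrite -leNgt.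
Qed.

Lemma e2_le0 n (e : 'I_n -> int) (adj : rel 'I_n) w :
  elliptic e adj setT -> ((e w + 2)%:~R : rat) <= 0.
Proof.
move=> [he _]; rewrite lerz0.
have := he w (in_setT w); rewrite -(lerD2r 2) => /le_trans; apply.
by [].
Qed.

Lemma chi_exp n (e : 'I_n -> int) (adj : rel 'I_n) (l : vec n) :
  symmetric adj -> negdef e adj setT ->
  chi e adj setT l =
  - (\sum_w l 0 w * (Defs.form e adj l (Ev w) - (e w + 2)%:~R)) / 2.
Proof.
move=> hs hnd; rewrite /chi form_exp //; congr (- _ / 2).
by apply: eq_bigr => w _; rewrite fB ZK_form ?in_setT.
Qed.

Lemma factF n (e : 'I_n -> int) (adj : rel 'I_n) (l : vec n) :
  symmetric adj -> negdef e adj setT -> elliptic e adj setT ->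
  (forall a, l 0 a \is a Num.int) -> lev 0 l ->
  (forall w, l 0 w != 0 -> (e w + 2)%:~R <= Defs.form e adj l (Ev w)) ->
  forall w, l 0 w != 0 -> Defs.form e adj l (Ev w) = (e w + 2)%:~R.
Proof.
move=> hs hnd hell hint hl hge w lw.
have tge0 : forall w, 0 <= l 0 w * (Defs.form e adj l (Ev w) - (e w + 2)%:~R).
  move=> u; have [->|lu] := eqVneq (l 0 u) 0; first by rewrite mul0r.
  by apply: mulr_ge0; [move/lev0E: hl; apply | rewrite subr_ge0 hge].
have l0 : l != 0 by apply/negP => /eqP l0; move: lw; rewrite l0 mxE eqxx.
have hL : inL setT l by split=> // a; rewrite in_setT.
have := (hell.2.2 l hL (conj hl l0)); rewrite chi_exp //.
rewrite pmulr_lge0 ?invr_gt0 // oppr_ge0 => hsum.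
have hsum0 : \sum_w l 0 w * (Defs.form e adj l (Ev w) - (e w + 2)%:~R) = 0.
  by apply/eqP; rewrite eq_le hsum sumr_ge0.
have h0 := psumr_eq0P (fun u _ => tge0 u) hsum0.
move/eqP: (h0 w isT).
by rewrite mulf_eq0 (negbTE lw) subr_eq0 => /eqP.
Qed.

Lemma CsumS n (Zs : nat -> vec n) k : Csum Zs k.+1 = Csum Zs k + Zs k.+1.
Proof. by rewrite /Csum big_ord_recr. Qed.

Lemma Csum0 n (Zs : nat -> vec n) : Csum Zs 0 = Zs 0%N.
Proof. by rewrite /Csum big_ord1. Qed.

Lemma Zmin_props n (e : 'I_n -> int) (adj : rel 'I_n) B (z : vec n) :
  is_Zmin e adj B z ->
  [/\ supported B z, forall a, z 0 a \is a Num.int &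
      forall w, w \in B -> Defs.form e adj z (Ev w) <= 0].
Proof. by case=> [[[[hs _] hf] [[_ hi] _]] _]. Qed.

Lemma Zmin_ge0 n (e : 'I_n -> int) (adj : rel 'I_n) B (z : vec n) :
  negdef e adj setT -> is_Zmin e adj B z -> lev 0 z.
Proof. by move=> hnd /Zmin_props [h1 h2 h3]; apply: (Sprime_ge0 _ e adj B). Qed.

Definition Rem n (e : 'I_n -> int) (adj : rel 'I_n) (ZG : nat -> vec n) k :=
  ZK e adj setT - Csum ZG k.
Arguments Rem {n}.

Lemma RemS n (e : 'I_n -> int) (adj : rel 'I_n) (ZG : nat -> vec n) k :
  Rem e adj ZG k.+1 = Rem e adj ZG k - ZG k.+1.
Proof. by rewrite /Rem CsumS opprD addrA. Qed.

Lemma RemSE n (e : 'I_n -> int) (adj : rel 'I_n) (ZG : nat -> vec n) k a :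
  Rem e adj ZG k.+1 0 a = Rem e adj ZG k 0 a - ZG k.+1 0 a.
Proof. by rewrite RemS !mxE. Qed.


Lemma R_int n (e : 'I_n -> int) (adj : rel 'I_n) BG ZG MG :
  NNseq e adj setT BG ZG MG ->
  forall k, (k <= MG)%N -> forall a, Rem e adj ZG k 0 a \is a Num.int.
Proof.
case=> _ [[_ hcl] _] hst _; elim=> [|k IH] hk a.
  rewrite /Rem Csum0; case: hcl => _ /(_ a).
  by rewrite !mxE => h; rewrite -opprB rpredN.
have [_ _ /Zmin_props [_ hz _]] := hst k hk.
by rewrite RemSE rpredB // IH // ltnW.
Qed.

Lemma R_ge0 n (e : 'I_n -> int) (adj : rel 'I_n) BG ZG MG :
  negdef e adj setT -> NNseq e adj setT BG ZG MG ->
  forall k, (k <= MG)%N -> lev 0 (Rem e adj ZG k).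
Proof.
move=> hnd hNN; have [_ _ hst hend] := hNN.
suff H : forall j, (j <= MG)%N -> lev 0 (Rem e adj ZG (MG - j)).
  by move=> k hk; have := H (MG - k)%N (leq_subr _ _); rewrite subKn.
elim=> [|j IH] hj.
  by rewrite subn0 /Rem hend subrr; apply/lev0E => v; rewrite mxE.
have hk : (MG - j.+1 < MG)%N by rewrite ltn_subrL /=; case: (MG) hj.
have [_ _ hz] := hst _ hk.
have e1 : (MG - j = (MG - j.+1).+1)%N by lia.
have := IH (ltnW hj); rewrite e1 => /lev0E h1.
apply/lev0E => v; have := h1 v; rewrite RemSE.
have /lev0E := Zmin_ge0 _ _ _ _ _ hnd hz => /(_ v) h2 h3.
by rewrite -(subrK (ZG (MG - j.+1).+1 0 v) (Rem e adj ZG (MG - j.+1) 0 v)); apply: addr_ge0.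
Qed.

Lemma supp_step n (e : 'I_n -> int) (adj : rel 'I_n) BG ZG MG :
  NNseq e adj setT BG ZG MG ->
  forall k w, (k < MG)%N -> Rem e adj ZG k.+1 0 w != 0 -> Rem e adj ZG k 0 w != 0.
Proof.
case=> _ _ hst _ k w hk; have [_ hB /Zmin_props [hsu _ _]] := hst k hk.
rewrite RemSE; apply: contra => /eqP h0.
rewrite h0 hsu ?subr0 // hB inE h0 eqxx //.
Qed.

Lemma supp_mono n (e : 'I_n -> int) (adj : rel 'I_n) BG ZG MG :
  NNseq e adj setT BG ZG MG ->
  forall k j w, (k <= j)%N -> (j <= MG)%N ->
    Rem e adj ZG j 0 w != 0 -> Rem e adj ZG k 0 w != 0.
Proof.
move=> hNN k j w hkj; elim: j hkj => [|j IH] hkj hj.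
  by rewrite leqn0 in hkj; rewrite (eqP hkj).
rewrite leq_eqVlt in hkj; case/orP: hkj => [/eqP -> //|hkj] h.
by apply: IH => //; [exact: ltnW | apply: (supp_step _ _ _ _ _ _ hNN)].
Qed.

Lemma R_ge_e2 n (e : 'I_n -> int) (adj : rel 'I_n) BG ZG MG :
  negdef e adj setT -> NNseq e adj setT BG ZG MG ->
  forall k, (k <= MG)%N -> forall w, Rem e adj ZG k 0 w != 0 ->
    (e w + 2)%:~R <= Defs.form e adj (Rem e adj ZG k) (Ev w).
Proof.
move=> hnd hNN; have [_ [[[_ hS] _] _] hst _] := hNN.
elim=> [|k IH] hk w hw.
  rewrite /Rem Csum0 fB ZK_form ?in_setT // lerDl oppr_ge0.
  by apply: hS; rewrite in_setT.
have hk' : (k < MG)%N by [].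
have [_ hB /Zmin_props [_ _ hf]] := hst k hk'.
have hw' := supp_step _ _ _ _ _ _ hNN k w hk' hw.
rewrite RemS fB; apply: (le_trans (IH (ltnW hk) w hw')).
rewrite lerDl oppr_ge0; apply: hf.
by rewrite hB inE.
Qed.

Lemma R_eq_e2 n (e : 'I_n -> int) (adj : rel 'I_n) BG ZG MG :
  symmetric adj -> negdef e adj setT -> elliptic e adj setT ->
  NNseq e adj setT BG ZG MG ->
  forall k, (k <= MG)%N -> forall w, Rem e adj ZG k 0 w != 0 ->
    Defs.form e adj (Rem e adj ZG k) (Ev w) = (e w + 2)%:~R.
Proof.
move=> hs hnd hell hNN k hk; apply: factF => //.
- exact: (R_int _ _ _ _ _ _ hNN).
- exact: (R_ge0 _ _ _ _ _ _ hnd hNN).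
- exact: (R_ge_e2 _ _ _ _ _ _ hnd hNN).
Qed.

Lemma aux_le0 n (e : 'I_n -> int) (adj : rel 'I_n) (S : {set 'I_n}) (A u : vec n) w :
  elliptic e adj setT -> lev 0 u -> supported S u ->
  Defs.form e adj A (Ev w) <= (e w + 2)%:~R ->
  (w \in S -> (e w + 2)%:~R <= Defs.form e adj u (Ev w)) ->
  Defs.form e adj (A - u) (Ev w) <= 0.
Proof.
move=> hell hu hsu hA hS; rewrite fB subr_le0; apply: (le_trans hA).
case: (boolP (w \in S)) => wS; first exact: hS.
apply: (le_trans (e2_le0 _ e adj w hell)); apply: fE_ge0 => //.
exact: hsu.
Qed.

Lemma subE n (x y : vec n) a : (x - y) 0 a = x 0 a - y 0 a.
Proof. by rewrite !mxE. Qed.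

Lemma bound n (e : 'I_n -> int) (adj : rel 'I_n) (S : {set 'I_n}) BG ZG MG i :
  symmetric adj -> negdef e adj setT -> elliptic e adj setT ->
  NNseq e adj setT BG ZG MG ->
  (i < MG)%N -> S \proper BG i ->
  forall u : vec n, supported S u -> (forall a, u 0 a \is a Num.int) -> lev 0 u ->
  (forall w, w \in S -> (e w + 2)%:~R <= Defs.form e adj u (Ev w)) ->
  lev u (Rem e adj ZG i).
Proof.
move=> hs hnd hell hNN hi hSB u hsu hui hu0 hue.
have [hB0 hs0 hst hend] := hNN.
case: i hi hSB => [|i] hi hSB.
  have [_ hmin] := hs0.
  have := hmin (ZK e adj setT - u).
  have P1 : inSprime e adj setT (ZK e adj setT - u) /\
            sameclass setT (ZK e adj setT - u) (ZK e adj setT).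
    split; first split; first split.
    - by move=> v; rewrite in_setT.
    - move=> v _; rewrite fB ZK_form ?in_setT //.
      by apply: rpredB; [apply: intr_int | apply: fint].
    - move=> v _; apply: (aux_le0 _ e adj S _ u v hell hu0 hsu _ (hue v)).
      by rewrite ZK_form ?in_setT.
    - split=> [v|v]; first by rewrite in_setT.
      by rewrite !mxE addrAC subrr add0r rpredN.
  move=> /(_ P1) h a; have := h a; rewrite /Rem Csum0 !mxE.
  by rewrite !lerBrDr addrC.
have [hR0 hB hz] := hst i (ltnW hi).
have [_ hmin] := hz.
have hSB' : S \subset BG i.+1 by apply: proper_sub.
have hout : forall v, v \notin BG i.+1 -> Rem e adj ZG i 0 v = 0.
  by move=> v; rewrite hB inE negbK => /eqP.
have hL : inL (BG i.+1) (Rem e adj ZG i - u).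
  split=> v.
    move=> vB; rewrite subE hout // hsu ?subrr //.
    by apply: contra vB; apply: (subsetP hSB').
  rewrite subE; apply: rpredB; [apply: (R_int _ _ _ _ _ _ hNN); exact: (leq_trans (leqnSn i) (ltnW hi)) | exact: hui].
have := hmin (Rem e adj ZG i - u).
have P1 : inSprime e adj (BG i.+1) (Rem e adj ZG i - u) /\
          inL (BG i.+1) (Rem e adj ZG i - u) /\ Rem e adj ZG i - u != 0.
  split; first split; first split.
  - by case: hL.
  - by move=> v _; apply: fint; case: hL.
  - move=> v vB; apply: (aux_le0 _ e adj S _ u v hell hu0 hsu _ (hue v)).
    have hv : Rem e adj ZG i 0 v != 0 by rewrite hB inE in vB.
    by rewrite (R_eq_e2 _ _ _ _ _ _ hs hnd hell hNN i (leq_trans (leqnSn i) (ltnW hi)) v hv).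
  split; first exact: hL.
  have /properP [_ [w wB wS]] := hSB.
  apply/negP => /eqP /rowP /(_ w); rewrite subE [in X in _ = X]mxE hsu // subr0 => /eqP.
  by rewrite hB inE in wB; rewrite (negbTE wB).
move=> /(_ P1) h a; have := h a; rewrite RemSE subE !lerBrDr addrC //.
Qed.

Lemma Rem_suppS n (e : 'I_n -> int) (adj : rel 'I_n) (S : {set 'I_n}) BG ZG MG i :
  NNseq e adj setT BG ZG MG -> (i < MG)%N -> BG i.+1 \subset S ->
  forall k, (i <= k)%N -> (k <= MG)%N -> supported S (Rem e adj ZG k).
Proof.
move=> hNN hi hBS k hik hk v vS; apply/eqP; apply: contraR vS => hv.
have := supp_mono _ _ _ _ _ _ hNN i k v hik hk hv => hv'.
have [_ _ hst _] := hNN; have [_ hB _] := hst i hi.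
by apply: (subsetP hBS); rewrite hB inE.
Qed.

Lemma key_sZK n (e : 'I_n -> int) (adj : rel 'I_n) (S : {set 'I_n}) BG ZG MG i :
  symmetric adj -> negdef e adj setT -> elliptic e adj setT ->
  NNseq e adj setT BG ZG MG ->
  (i < MG)%N -> BG i.+1 \subset S -> S \proper BG i ->
  is_sZK e adj S (ZK e adj S - Rem e adj ZG i).
Proof.
move=> hs hnd hell hNN hi hBS hSB.
have hRS := Rem_suppS _ e adj S _ _ _ i hNN hi hBS i (leqnn i) (ltnW hi).
have hRi := R_int _ _ _ _ _ _ hNN i (ltnW hi).
have hR0 := R_ge0 _ _ _ _ _ _ hnd hNN i (ltnW hi).
split.
  split; first split; first split.
  - by move=> v vS; rewrite subE (ZK_supp _ e adj S hnd v vS) (hRS v vS) subr0.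
  - move=> v vS; rewrite fB ZK_form //; apply: rpredB; first exact: intr_int.
    exact: fint.
  - move=> v vS; rewrite fB ZK_form // subr_le0.
    have [h0|hv] := eqVneq (Rem e adj ZG i 0 v) 0.
      apply: (le_trans (e2_le0 _ e adj v hell)); exact: fE_ge0.
    exact: (R_ge_e2 _ _ _ _ _ _ hnd hNN i (ltnW hi) v hv).
  - split=> v.
      by move=> vS; rewrite 2!subE (ZK_supp _ e adj S hnd v vS) (hRS v vS) !subrr.
    by rewrite 2!subE addrAC subrr add0r rpredN.
move=> y [[[hys _] hyf] [hcs hci]].
pose u : vec n := ZK e adj S - y.
pose up : vec n := \row_a (if 0 <= u 0 a then u 0 a else 0).
have hui : forall a, u 0 a \is a Num.int.
  by move=> a; have := hci a; rewrite /u !subE -opprB rpredN.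
have hup0 : lev 0 up.
  by apply/lev0E => a; rewrite [up 0 a]mxE; case: ifP.
have huup : forall a, u 0 a <= up 0 a.
  move=> a; rewrite [up 0 a]mxE; case: ifP => [_|/negbT]; first exact: lexx.
  by rewrite -ltNge => /ltW.
have hbd := bound _ e adj S BG ZG MG i hs hnd hell hNN hi hSB up.
have hsu : supported S up.
  move=> a aS; rewrite mxE /u subE (ZK_supp _ e adj S hnd a aS) (hys a aS) subrr.
  by rewrite lexx.
have hfu : forall w, w \in S -> (e w + 2)%:~R <= Defs.form e adj u (Ev w).
  by move=> w wS; rewrite /u fB ZK_form // lerDl oppr_ge0; apply: hyf.
have hupi : forall a, up 0 a \is a Num.int.
  by move=> a; rewrite [up 0 a]mxE; case: ifP => _ //; apply: rpred0.
have hfup : forall w, w \in S -> (e w + 2)%:~R <= Defs.form e adj up (Ev w).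
  move=> w wS; case: (boolP (0 <= u 0 w)) => uw.
    have -> : up = u + (up - u) by rewrite addrC subrK.
    rewrite fD; apply: (le_trans (hfu w wS)); rewrite lerDl; apply: fE_ge0.
      by apply/lev0E => b; rewrite subE subr_ge0.
    by rewrite subE [up 0 w]mxE uw subrr.
  apply: (le_trans (e2_le0 _ e adj w hell)); apply: fE_ge0 => //.
  by rewrite [up 0 w]mxE (negbTE uw).
have hle := hbd hsu hupi hup0 hfup.
move=> a; rewrite subE.
have hya : y 0 a = ZK e adj S 0 a - u 0 a by rewrite /u subE opprB addrC subrK.
rewrite hya; apply: lerB => //; apply: (le_trans (huup a)); exact: hle.
Qed.

Lemma min_uniq n (P : vec n -> Prop) (a b : vec n) : is_min P a -> is_min P b -> a = b.
Proof.
move=> [Pa ha] [Pb hb]; apply/rowP => v.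
by apply/le_anti; rewrite (ha b Pb v) (hb a Pa v).
Qed.

Lemma jstar_C n (e : 'I_n -> int) (adj : rel 'I_n) (S : {set 'I_n}) BG ZG MG i k :
  negdef e adj setT -> NNseq e adj setT BG ZG MG ->
  (i < MG)%N -> BG i.+1 \subset S -> (i <= k)%N -> (k <= MG)%N ->
  jstar e adj S (Csum ZG k) = ZK e adj S - Rem e adj ZG k.
Proof.
move=> hnd hNN hi hBS hik hk.
have hRS := Rem_suppS _ e adj S _ _ _ i hNN hi hBS k hik hk.
apply: (uniqS _ e adj S) => //.
- exact: jstar_supp.
- by move=> v vS; rewrite subE (ZK_supp _ e adj S hnd v vS) (hRS v vS) subr0.
move=> w wS; rewrite jstar_form // fB ZK_form //.
have -> : Csum ZG k = ZK e adj setT - Rem e adj ZG k by rewrite /Rem opprB addrC subrK.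
by rewrite fB ZK_form ?in_setT.
Qed.

Theorem mainTheorem11 (n : nat) (e : 'I_n -> int) (adj : rel 'I_n)
  (S : {set 'I_n}) (BG BS : nat -> {set 'I_n}) (ZG ZS : nat -> vec n)
  (MG MS i : nat) :
  symmetric adj -> irreflexive adj -> is_tree adj ->
  negdef e adj setT ->
  elliptic e adj setT -> elliptic e adj S ->
  S \proper setT -> connectedS adj S ->
  NNseq e adj setT BG ZG MG -> NNseq e adj S BS ZS MS ->
  (i < MG)%N -> BG i.+1 \subset S -> S \proper BG i ->
  forall k, (i <= k <= MG)%N ->
    jstar e adj S (Csum ZG k) = Csum ZS (k - i).
Proof.
move=> hs _ _ hnd hell _ _ _ hNN hNNS hi hBS hSB k /andP [hik hk].
have [_ hs0S hstS hendS] := hNNS.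
have [_ _ hst _] := hNN.
have hZS0 : ZS 0%N = ZK e adj S - Rem e adj ZG i.
  exact: (min_uniq _ _ _ _ hs0S (key_sZK _ e adj S BG ZG MG i hs hnd hell hNN hi hBS hSB)).
have main : forall t, (t + i <= MG)%N -> forall t', (t' <= t)%N ->
    ZK e adj S - Csum ZS t' = Rem e adj ZG (t' + i).
  elim=> [|t IH] ht t' ht'.
    by rewrite leqn0 in ht'; rewrite (eqP ht') Csum0 hZS0 add0n opprB addrC subrK.
  have ht0 : (t + i <= MG)%N by rewrite addSn in ht; apply: ltnW.
  rewrite leq_eqVlt in ht'; case/orP: ht' => [/eqP ->|ht']; last first.
    by apply: IH.
  have htMS : (t < MS)%N.
    rewrite ltnNge; apply/negP => hMS.
    have := IH ht0 MS hMS; rewrite hendS subrr => h0.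
    have hlt : (MS + i < MG)%N.
      by apply: leq_trans ht; rewrite addSn ltnS leq_add2r.
    have [hne _ _] := hst _ hlt.
    by move: hne; rewrite -/(Rem e adj ZG (MS + i)) -h0 eqxx.
  have hlt : (t + i < MG)%N by rewrite addSn in ht.
  have [_ hBt hZt] := hstS t htMS.
  have [_ hBG hZG] := hst _ hlt.
  rewrite (IH ht0 t (leqnn t)) in hBt.
  rewrite -/(Rem e adj ZG (t + i)) -hBt in hBG.
  rewrite hBG in hZG.
  have hZ := min_uniq _ _ _ _ hZt hZG.
  rewrite CsumS opprD addrA (IH ht0 t (leqnn t)) hZ addSn.
  by rewrite RemS.
have hki : (k - i + i = k)%N by rewrite subnK.
have hm : (k - i + i <= MG)%N by rewrite hki.
have := main (k - i)%N hm (k - i)%N (leqnn _).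
rewrite hki => h.
rewrite (jstar_C _ e adj S BG ZG MG i k hnd hNN hi hBS hik hk) -h.
by rewrite opprB addrC subrK.
Qed.
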